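(* There exists an infinite biosphere $(G,t)$ such that $\mathrm{REF}$ is not downward generic.
   Context: An infinite biosphere is a directed graph $G$ together with a function $t$ assigning a real number $t(v)$ to each vertex, such that: (1) if $v$ is a parent of $w$ (edge from $v$ to $w$) then $t(v)<t(w)$; (2) for every $r\in\mathbb R$ at most finitely many vertices $v$ have $t(v)<r$; (3) every vertex has finitely many children; (4) $G$ is infinite. $w$ is a descendant of $v$ if there is a directed path from $v$ to $w$ of length at least one. $\mathrm{REF}$ is the set of sets $S$ of vertices of $G$ such that every $v\in S$ having infinitely many descendants in $G$ has infinitely many descendants in $S$. For a nonempty linear order $(X,<)$, a descending chain of $G$-subsets indexed by $X$ is a family $\{C_\alpha\}_{\alpha\in X}$ with $C_\beta\subseteq C_\alpha$ whenever $\alpha<\beta$. A set $T$ of $G$-subsets is downward generic if for every descending chain $\{C_\alpha\}_{\alpha\in X}$ of nonempty $G$-subsets with each $C_\alpha\in T$, $\bigcap_\alpha C_\alpha\in T$. *)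

(* Defs.v *)
From Stdlib Require Import Reals List Relations.
Open Scope R_scope.

Definition finite_pred {V : Type} (P : V -> Prop) : Prop :=
  exists l : list V, forall x, P x -> In x l.

Definition infinite_pred {V : Type} (P : V -> Prop) : Prop := ~ finite_pred P.

(* A directed graph on vertex type V is given by its edge relation E:
   E v w means there is an edge from v to w (v is a parent of w). *)
Record biosphere (V : Type) (E : V -> V -> Prop) (t : V -> R) : Prop := {
  bio_edge : forall v w, E v w -> t v < t w;
  bio_below : forall r : R, finite_pred (fun v => t v < r);
  bio_children : forall v, finite_pred (fun w => E v w);
  bio_infinite : infinite_pred (fun _ : V => True)
}.

Definition descendant {V : Type} (E : V -> V -> Prop) (v w : V) : Prop :=
  clos_trans V E v w.

Definition REF {V : Type} (E : V -> V -> Prop) (S : V -> Prop) : Prop :=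
  forall v, S v ->
    infinite_pred (fun w => descendant E v w) ->
    infinite_pred (fun w => descendant E v w /\ S w).

Definition strict_linear_order {X : Type} (lt : X -> X -> Prop) : Prop :=
  (forall a, ~ lt a a) /\
  (forall a b c, lt a b -> lt b c -> lt a c) /\
  (forall a b, lt a b \/ a = b \/ lt b a).

Definition downward_generic {V : Type} (T : (V -> Prop) -> Prop) : Prop :=
  forall (X : Type) (lt : X -> X -> Prop) (C : X -> V -> Prop),
    inhabited X ->
    strict_linear_order lt ->
    (forall a b, lt a b -> forall v, C b v -> C a v) ->
    (forall a, exists v, C a v) ->
    (forall a, T (C a)) ->
    T (fun v => forall a, C a v).

(* Main.v *)
Require Import Defs.
From Stdlib Require Import Reals Lra Lia List Relations Arith ZArith.

Lemma in_le_sum (l : list nat) x : In x l -> (x <= list_sum l)%nat.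
Proof. induction l as [|a l IH]; simpl; [tauto|]. intros [->|H]; [lia|]. specialize (IH H); lia. Qed.

Lemma inf_nat (P : nat -> Prop) : (forall N, exists n, (N <= n)%nat /\ P n) -> infinite_pred P.
Proof.
  intros H [l Hl]. destruct (H (S (list_sum l))) as [n [Hn Pn]].
  apply Hl, in_le_sum in Pn. lia.
Qed.

Definition Esucc (n m : nat) : Prop := m = S n.

Lemma desc_lt v w : descendant Esucc v w -> (v < w)%nat.
Proof. unfold descendant. induction 1 as [x y H| x y z _ IH1 _ IH2]; unfold Esucc in *; lia. Qed.

Lemma lt_desc v w : (v < w)%nat -> descendant Esucc v w.
Proof.
  induction w as [|w IH]; intros H; [lia|].
  destruct (Nat.eq_dec v w) as [->|Hne].
  - apply t_step. reflexivity.
  - eapply t_trans; [apply IH; lia|]. apply t_step. reflexivity.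
Qed.

Theorem mainTheorem8 :
  exists (V : Type) (E : V -> V -> Prop) (t : V -> R),
    biosphere V E t /\ ~ downward_generic (REF E).
Proof.
  exists nat, Esucc, INR. split.
  - constructor.
    + intros v w ->. apply lt_INR. lia.
    + intros r. destruct (archimed r) as [H1 _].
      assert (Hup : (0 <= IZR (up r)) \/ IZR (up r) < 0) by lra.
      exists (seq 0 (Z.to_nat (up r))). intros v Hv. apply in_seq.
      split; [lia|]. simpl.
      destruct (Z.lt_ge_cases (up r) 0) as [Hz|Hz].
      * exfalso. apply IZR_lt in Hz. pose proof (pos_INR v). lra.
      * assert (INR v < INR (Z.to_nat (up r))).
        { rewrite (INR_IZR_INZ (Z.to_nat (up r))), Z2Nat.id; [lra | lia]. }
        apply INR_lt in H. lia.
    + intros v. exists (S v :: nil). intros w ->. left. reflexivity.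
    + apply inf_nat. intros N. exists N. split; auto.
  - intros Hdg.
    specialize (Hdg nat lt (fun k v => v = 0%nat \/ (k <= v)%nat)).
    assert (Hbad : REF Esucc (fun v => forall a, v = 0%nat \/ (a <= v)%nat)).
    { apply Hdg.
      - constructor. exact 0%nat.
      - repeat split; intros; lia.
      - intros a b Hab v [H|H]; [left; auto|right; lia].
      - intros a. exists 0%nat. left. reflexivity.
      - intros a v Hv _. apply inf_nat. intros N. exists (N + S v + a)%nat.
        split; [lia|]. split; [apply lt_desc; lia|]. right; lia. }
    specialize (Hbad 0%nat (fun a => or_introl eq_refl)).
    apply Hbad.
    + apply inf_nat. intros N. exists (S N). split; [lia|]. apply lt_desc; lia.
    + exists nil. intros w [Hd Hw]. apply desc_lt in Hd.
      destruct (Hw (S w)); lia.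
Qed.
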